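(* In the setting described in the context (with $L=[0,1]$), let $q\in\{1,\dots,n\}$ and assume there exists $A\subseteq\mathcal C$ with $|A|=q$ and $\eta_q(A)=1$. Define $\mu^*:2^{\mathcal C}\to[0,1]$ by $\mu^*(\emptyset)=0$, $\mu^*(X)=\eta_q(X)$ if $0<|X|\le q$, and $\mu^*(X)=\max_{\emptyset\neq Y\subsetneq X,\ |Y|\le q}\eta_q(Y)$ if $|X|>q$. Then $\mu^*$ is the greatest (pointwise) among all $q$-maxitive capacities $\mu:2^{\mathcal C}\to[0,1]$ satisfying $\max_{1\le k\le N}|S_\mu(x^{(k)})-\alpha^{(k)}|=\Delta_q$.
   Context: Let $\mathcal C=\{1,\dots,n\}$ and $L=[0,1]$. A capacity is a map $\mu:2^{\mathcal C}\to[0,1]$ with $\mu(\emptyset)=0$, $\mu(\mathcal C)=1$, monotone for inclusion; it is $q$-maxitive if for all $X$ with $|X|>q$, $\mu(X)=\max_{Y\subsetneq X,\ |Y|\le q}\mu(Y)$. Sugeno integral: $S_\mu(x)=\max_{A\subseteq\mathcal C}\min(\min_{i\in A}x_i,\mu(A))$ with $\min_{i\in\emptyset}x_i=1$. Training data: $N$ pairs $(x^{(k)},\alpha^{(k)})$, $x^{(k)}\in[0,1]^n$, $\alpha^{(k)}\in[0,1]$. For nonempty $A$, $m_{k,A}=\min_{i\in A}x^{(k)}_i$. Write $t^+=\max(t,0)$. For $1\le i\le N$ and $0<|A|\le q$, let $\sigma_G(\alpha^{(i)},m_{l,A},\alpha^{(l)})=\min\big(\tfrac{(\alpha^{(i)}-\alpha^{(l)})^+}{2},(m_{l,A}-\alpha^{(l)})^+\big)$,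 $\delta_{i,A}=\max\big((\alpha^{(i)}-m_{i,A})^+,\max_{1\le l\le N}\sigma_G(\alpha^{(i)},m_{l,A},\alpha^{(l)})\big)$, $\delta_i=\min_{0<|A|\le q}\delta_{i,A}$, and $\Delta_q=\max_{1\le i\le N}\delta_i$. For $0<|A|\le q$, $\eta_q(A)=\min_{1\le k\le N}\big(m_{k,A}\to_G\min(\alpha^{(k)}+\Delta_q,1)\big)$, where $a\to_G b=1$ if $a\le b$ and $a\to_G b=b$ otherwise. *)

(* Defs.v *)
From mathcomp Require Import all_boot all_order all_algebra.
From mathcomp Require Import reals.
Set Implicit Arguments. Unset Strict Implicit. Unset Printing Implicit Defensive.
Import Order.TTheory GRing.Theory Num.Theory.
Local Open Scope ring_scope.

Section Defs.
Variable R : realType.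

Definition posp (t : R) : R := Num.max t 0.

Definition impG (a b : R) : R := if a <= b then 1 else b.

Definition minset n (x : 'I_n -> R) (A : {set 'I_n}) : R :=
  \big[Num.min/1]_(i in A) x i.

(* Sugeno integral; all terms are >= 0 for mu, x valued in [0,1],
   so 0 is a neutral element for this max *)
Definition sugeno n (mu : {set 'I_n} -> R) (x : 'I_n -> R) : R :=
  \big[Num.max/0]_(A : {set 'I_n}) Num.min (minset x A) (mu A).

Definition is_capacity n (mu : {set 'I_n} -> R) : Prop :=
  [/\ mu set0 = 0, mu setT = 1,
      (forall X, 0 <= mu X <= 1) &
      (forall X Y : {set 'I_n}, X \subset Y -> mu X <= mu Y)].

Definition q_maxitive n (q : nat) (mu : {set 'I_n} -> R) : Prop :=
  forall X : {set 'I_n}, (q < #|X|)%N ->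
    mu X = \big[Num.max/0]_(Y : {set 'I_n} | (Y \proper X) && (#|Y| <= q)%N) mu Y.

Variables (n N : nat) (x : 'I_N -> 'I_n -> R) (alpha : 'I_N -> R) (q : nat).

Definition mk (k : 'I_N) (A : {set 'I_n}) : R := minset (x k) A.

Definition sigmaG (ai mlA al : R) : R :=
  Num.min (posp (ai - al) / 2) (posp (mlA - al)).

Definition delta_iA (i : 'I_N) (A : {set 'I_n}) : R :=
  Num.max (posp (alpha i - mk i A))
          (\big[Num.max/0]_(l : 'I_N) sigmaG (alpha i) (mk l A) (alpha l)).

(* delta_i = min over 0 < |A| <= q (values lie in [0,1]) *)
Definition delta_i (i : 'I_N) : R :=
  \big[Num.min/1]_(A : {set 'I_n} | (0 < #|A| <= q)%N) delta_iA i A.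

Definition Delta_q : R := \big[Num.max/0]_(i : 'I_N) delta_i i.

Definition eta_q (A : {set 'I_n}) : R :=
  \big[Num.min/1]_(k : 'I_N) impG (mk k A) (Num.min (alpha k + Delta_q) 1).

Definition mu_star (X : {set 'I_n}) : R :=
  if X == set0 then 0
  else if (#|X| <= q)%N then eta_q X
  else \big[Num.max/0]_(Y : {set 'I_n} | [&& Y != set0, Y \proper X & (#|Y| <= q)%N])
         eta_q Y.

Definition fit_error (mu : {set 'I_n} -> R) : R :=
  \big[Num.max/0]_(k : 'I_N) `|sugeno mu (x k) - alpha k|.

End Defs.

(* Main.v *)
Require Import Defs.
From mathcomp Require Import all_boot all_order all_algebra.
From mathcomp Require Import reals lra.
Import Order.TTheory GRing.Theory Num.Theory.
Local Open Scope ring_scope.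

Section Proof.
Variables (R : realType) (n N : nat) (x : 'I_N -> 'I_n -> R) (alpha : 'I_N -> R) (q : nat).
Hypothesis hx : forall k i, 0 <= x k i <= 1.
Hypothesis halpha : forall k, 0 <= alpha k <= 1.
Hypothesis hq : (1 <= q <= n)%N.
Hypothesis hA : exists A : {set 'I_n}, #|A| = q /\ eta_q x alpha q A = 1.

Lemma bigmax_gt_ex (I : finType) (P : pred I) (F : I -> R) c :
  0 <= c -> c < \big[Num.max/0]_(i | P i) F i -> exists2 i, P i & c < F i.
Proof.
move=> c0 H; case: (boolP [exists i, P i && (c < F i)]).
  by move=> /existsP[i /andP[Pi Hi]]; exists i.
move=> /existsPn Hn; exfalso; move: H; apply/negP; rewrite -leNgt.
by apply: bigmax_le => // i Pi; move: (Hn i); rewrite Pi /= -leNgt.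
Qed.

Lemma minset_ge0 (y : 'I_n -> R) (A : {set 'I_n}) : (forall i, 0 <= y i) -> 0 <= Defs.minset y A.
Proof. by move=> hy; apply: le_bigmin. Qed.
Lemma minset_le1 (y : 'I_n -> R) (A : {set 'I_n}) : Defs.minset y A <= 1.
Proof. exact: bigmin_le_id. Qed.
Lemma minset_le (y : 'I_n -> R) (A : {set 'I_n}) i : i \in A -> Defs.minset y A <= y i.
Proof. by move=> iA; apply: bigmin_le_cond. Qed.
Lemma minset_anti (y : 'I_n -> R) (A B : {set 'I_n}) : A \subset B -> Defs.minset y B <= Defs.minset y A.
Proof.
move=> sAB; apply: le_bigmin; first exact: minset_le1.
by move=> i iA; apply: minset_le; apply: (subsetP sAB).
Qed.
Lemma minset0 (y : 'I_n -> R) : Defs.minset y set0 = 1.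
Proof. by rewrite /Defs.minset big_set0. Qed.

Lemma mk_ge0 k (A : {set 'I_n}) : 0 <= mk x k A.
Proof. by apply: minset_ge0 => i; case/andP: (hx k i). Qed.
Lemma mk_le1 k (A : {set 'I_n}) : mk x k A <= 1.
Proof. exact: minset_le1. Qed.

Notation D := (Delta_q x alpha q).
Lemma D_ge0 : 0 <= D.
Proof. exact: bigmax_ge_id. Qed.

Lemma alpha0 k : 0 <= alpha k. Proof. by case/andP: (halpha k). Qed.
Lemma alpha1 k : alpha k <= 1. Proof. by case/andP: (halpha k). Qed.

Lemma cc_ge0 k : 0 <= Num.min (alpha k + D) 1.
Proof. by rewrite le_min ler01 andbT addr_ge0 // ?alpha0 ?D_ge0. Qed.
Lemma cc_le1 k : Num.min (alpha k + D) 1 <= 1.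
Proof. by rewrite ge_min lexx orbT. Qed.

Lemma eta_ge0 (A : {set 'I_n}) : 0 <= eta_q x alpha q A.
Proof.
apply: le_bigmin => // k _; rewrite /impG; case: ifP => // _; exact: cc_ge0.
Qed.
Lemma eta_le1 (A : {set 'I_n}) : eta_q x alpha q A <= 1.
Proof. exact: bigmin_le_id. Qed.

Lemma eta_mono (A B : {set 'I_n}) : A \subset B -> eta_q x alpha q A <= eta_q x alpha q B.
Proof.
move=> sAB; apply: le_bigmin2 => k _; rewrite /impG.
have h := @minset_anti (x k) _ _ sAB; rewrite -/(mk x k A) -/(mk x k B) in h.
case: ifP => H1; case: ifP => H2 //.
- by rewrite (le_trans h H1) in H2.
- exact: cc_le1.
Qed.

Lemma eta_le k (A : {set 'I_n}) : eta_q x alpha q A <= impG (mk x k A) (Num.min (alpha k + D) 1).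
Proof. exact: bigmin_le_cond. Qed.


Lemma min_mono (a b c d : R) : a <= c -> b <= d -> Num.min a b <= Num.min c d.
Proof. by move=> h1 h2; rewrite le_min !ge_min h1 h2 !orbT. Qed.

Lemma sug_ge (mu : {set 'I_n} -> R) (y : 'I_n -> R) (A : {set 'I_n}) :
  Num.min (Defs.minset y A) (mu A) <= sugeno mu y.
Proof. rewrite /sugeno; exact: (le_bigmax 0 (fun A => Num.min (Defs.minset y A) (mu A)) A). Qed.

Lemma sug_wit (mu : {set 'I_n} -> R) (y : 'I_n -> R) :
  is_capacity mu -> q_maxitive q mu -> (forall i, 0 <= y i) ->
  exists A : {set 'I_n}, (#|A| <= q)%N /\ sugeno mu y = Num.min (Defs.minset y A) (mu A).
Proof.
case=> mu0 mu1 mu01 mumono qm hy.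
have mu_ge0 : forall Y, 0 <= mu Y by move=> Y; case/andP: (mu01 Y).
have [A0 _ HA0] := @eq_bigmax _ _ _ 0 set0 predT
   (fun A => Num.min (Defs.minset y A) (mu A)) isT
   (fun A _ => ltac:(by rewrite le_min minset_ge0 ?mu_ge0)).
rewrite /sugeno HA0.
case: (leqP #|A0| q) => hA0; first by exists A0.
have p0 : (set0 \proper A0) && (#|(set0 : {set 'I_n})| <= q)%N.
  by rewrite cards0 andbT proper0 -card_gt0; apply: leq_ltn_trans hA0.
have [Y /andP[pY cY] HY] := @eq_bigmax _ _ _ 0 set0
   (fun Y : {set 'I_n} => (Y \proper A0) && (#|Y| <= q)%N) mu p0 (fun Y _ => mu_ge0 Y).
exists Y; split => //.
apply: le_anti; apply/andP; split.
  rewrite (qm _ hA0) HY; apply: min_mono => //; apply: minset_anti.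
  exact: proper_sub.
rewrite -HA0; exact: sug_ge.
Qed.


Notation ms := (mu_star x alpha q).
Notation eta := (eta_q x alpha q).

Lemma ms0 : ms set0 = 0.
Proof. by rewrite /mu_star eqxx. Qed.
Lemma ms_small (X : {set 'I_n}) : X != set0 -> (#|X| <= q)%N -> ms X = eta X.
Proof. by move=> h1 h2; rewrite /mu_star (negbTE h1) h2. Qed.
Lemma ms_big {X : {set 'I_n}} : (q < #|X|)%N ->
  ms X = \big[Num.max/0]_(Y : {set 'I_n} | [&& Y != set0, Y \proper X & (#|Y| <= q)%N]) eta Y.
Proof.
move=> h; have h1 : X != set0 by rewrite -card_gt0; apply: leq_ltn_trans h.
by rewrite /mu_star (negbTE h1) leqNgt h.
Qed.

Lemma ms_ge0 X : 0 <= ms X.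
Proof.
rewrite /mu_star; case: ifP => // _; case: ifP => _; first exact: eta_ge0.
exact: bigmax_ge_id.
Qed.
Lemma ms_le1 X : ms X <= 1.
Proof.
rewrite /mu_star; case: ifP => _; first exact: ler01.
case: ifP => _; first exact: eta_le1.
by apply: bigmax_le => // *; apply: eta_le1.
Qed.

Lemma ms_mono (X Y : {set 'I_n}) : X \subset Y -> ms X <= ms Y.
Proof.
move=> sXY; case: (X =P set0) => [->|/eqP X0]; first by rewrite ms0 ms_ge0.
have Y0 : Y != set0.
  by apply/negP => /eqP Y0; move: sXY; rewrite Y0 subset0 (negbTE X0).
have cXY := subset_leq_card sXY.
case: (leqP #|Y| q) => hY.
  rewrite !ms_small //; [exact: eta_mono | exact: leq_trans hY].
rewrite (ms_big hY).
case: (leqP #|X| q) => hX.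
  rewrite ms_small //; apply: (bigmax_sup X) => //.
  by rewrite X0 hX properEcard sXY (leq_ltn_trans hX hY).
rewrite (ms_big hX); apply: bigmax_le; first exact: bigmax_ge_id.
move=> Z /and3P[Z0 pZ cZ]; apply: (bigmax_sup Z) => //.
by rewrite Z0 cZ (proper_sub_trans pZ sXY).
Qed.

Lemma ms_T : (1 <= q <= n)%N -> (exists A : {set 'I_n}, #|A| = q /\ eta A = 1) -> ms setT = 1.
Proof.
move=> hq' [A [cA eA]]; apply: le_anti; rewrite ms_le1 /=.
have A0 : A != set0 by rewrite -card_gt0 cA; case/andP: hq'.
have cT : #|[set: 'I_n]| = n by rewrite cardsT card_ord.
case: (leqP #|[set: 'I_n]| q) => hT.
  rewrite ms_small //; last by rewrite -card_gt0 cT; case/andP: hq' => h1 h2; apply: leq_trans h2.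
  by rewrite -eA; apply: eta_mono; apply: subsetT.
rewrite (ms_big hT); apply: (bigmax_sup A) => //; last by rewrite eA.
by rewrite A0 cA leqnn properEcard subsetT cA hT.
Qed.

Lemma ms_qmax : q_maxitive q ms.
Proof.
move=> X hX; rewrite (ms_big hX); apply: le_anti; apply/andP; split.
  apply: bigmax_le; first exact: bigmax_ge_id.
  move=> Y /and3P[Y0 pY cY]; apply: (bigmax_sup Y); first by rewrite pY cY.
  by rewrite ms_small.
apply: bigmax_le; first exact: bigmax_ge_id.
move=> Y /andP[pY cY]; case: (Y =P set0) => [->|/eqP Y0].
  by rewrite ms0 bigmax_ge_id.
apply: (bigmax_sup Y); first by rewrite Y0 pY cY.
by rewrite ms_small.
Qed.

Lemma ms_cap : (1 <= q <= n)%N -> (exists A : {set 'I_n}, #|A| = q /\ eta A = 1) ->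
  is_capacity ms.
Proof.
move=> h1 h2; split.
- exact: ms0.
- exact: ms_T.
- by move=> X; rewrite ms_ge0 ms_le1.
- exact: ms_mono.
Qed.


Lemma posp_cases (t : R) : posp t = t \/ (posp t = 0 /\ t <= 0).
Proof. by rewrite /posp maxEle; case: ifP => h; [right|left]. Qed.

Lemma delta_le_alpha i (A : {set 'I_n}) : delta_iA x alpha i A <= alpha i.
Proof.
have a0 := alpha0 i; have m0 := mk_ge0 i A.
rewrite /delta_iA ge_max; apply/andP; split.
  by case: (posp_cases (alpha i - mk x i A)) => [->|[-> _]]; lra.
apply: bigmax_le => // l _; rewrite /sigmaG ge_min; apply/orP; left.
have := alpha0 l.
by case: (posp_cases (alpha i - alpha l)) => [->|[-> _]]; lra.
Qed.

Lemma delta_le1 i (A : {set 'I_n}) : delta_iA x alpha i A <= 1.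
Proof. exact: le_trans (delta_le_alpha i A) (alpha1 i). Qed.

Lemma exists_i0 : 'I_n.
Proof. by case/andP: hq => h1 h2; exists 0%N; apply: leq_trans h2. Qed.

Lemma delta_wit k : exists A : {set 'I_n}, (0 < #|A| <= q)%N /\
   delta_i x alpha q k = delta_iA x alpha k A.
Proof.
have Pj : (0 < #|[set exists_i0]| <= q)%N by rewrite cards1; case/andP: hq.
have [A PA HA] := @eq_bigmin _ _ _ 1 [set exists_i0]
  (fun A : {set 'I_n} => (0 < #|A| <= q)%N) (fun A => delta_iA x alpha k A) Pj
  (fun A _ => delta_le1 k A).
by exists A.
Qed.

Lemma ms_err k : `|sugeno ms (x k) - alpha k| <= D.
Proof.
have D0 := D_ge0; have ak0 := alpha0 k; have ak1 := alpha1 k.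
rewrite ler_distl; apply/andP; split.
  have [A [PA HA]] := delta_wit k.
  have hd : delta_iA x alpha k A <= D by rewrite -HA; exact: (le_bigmax 0 (delta_i x alpha q) k).
  move: hd; rewrite /delta_iA ge_max => /andP[h1 h2].
  have h1' : alpha k - mk x k A <= D.
    by move: h1; case: (posp_cases (alpha k - mk x k A)) => [->|[-> ?]]; lra.
  apply: le_trans (sug_ge ms (x k) A).
  have A0 : A != set0 by rewrite -card_gt0; case/andP: PA.
  rewrite ms_small //; last by case/andP: PA.
  rewrite le_min; apply/andP; split; first by rewrite /mk in h1'; lra.
  apply: le_bigmin; first lra.
  move=> l _; rewrite /impG; case: ifP => hc; first lra.
  have hs : sigmaG (alpha k) (mk x l A) (alpha l) <= D.
    by apply: le_trans h2; exact: (le_bigmax 0 (fun l => sigmaG (alpha k) (mk x l A) (alpha l)) l).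
  rewrite le_min; apply/andP; split; last lra.
  move: hs; rewrite /sigmaG ge_min => /orP[hs|hs].
    by move: hs; case: (posp_cases (alpha k - alpha l)) => [->|[-> ?]]; lra.
  have hm1 := mk_le1 l A.
  have hs' : mk x l A <= alpha l + D.
    by move: hs; case: (posp_cases (mk x l A - alpha l)) => [->|[-> ?]]; lra.
  by move: hc; rewrite le_min hs' hm1.
have [A [cA HA]] := @sug_wit ms (x k) (ms_cap hq hA) ms_qmax (fun i => ltac:(by case/andP: (hx k i))).
rewrite HA; case: (A =P set0) => [->|/eqP A0].
  by rewrite ms0 ge_min; apply/orP; right; lra.
rewrite ms_small //.
have e := eta_le k A; rewrite -/(mk x k A); apply: (le_trans (y := Num.min (mk x k A) (impG (mk x k A) (Num.min (alpha k + D) 1)))); first exact: min_mono.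
rewrite /impG; case: ifP => hc.
  rewrite ge_min; apply/orP; left; apply: le_trans hc _; rewrite ge_min; apply/orP; left; lra.
rewrite ge_min; apply/orP; right; rewrite ge_min; apply/orP; left; lra.
Qed.


Lemma err_ge (mu : {set 'I_n} -> R) : is_capacity mu -> q_maxitive q mu ->
  D <= fit_error x alpha mu.
Proof.
move=> cap qm; have cap' := cap; case: cap' => mu0 mu1 mu01 mumono.
set E := fit_error x alpha mu.
have hE : forall k, `|sugeno mu (x k) - alpha k| <= E.
  by move=> k; exact: (le_bigmax 0 (fun k => `|sugeno mu (x k) - alpha k|) k).
have E0 : 0 <= E by exact: bigmax_ge_id.
apply: bigmax_le => // i _; rewrite leNgt; apply/negP => Hlt.
have [A [cA HA]] := @sug_wit mu (x i) cap qm (fun j => ltac:(by case/andP: (hx i j))).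
have := hE i; rewrite ler_distl HA => /andP[Hlo _].
case: (A =P set0) => [A0 | /eqP An0].
  move: Hlo; rewrite A0 mu0 => Hlo.
  have ha : alpha i <= E.
    have : Num.min (Defs.minset (x i) set0) 0 <= 0 by rewrite ge_min lexx orbT.
    lra.
  have : delta_i x alpha q i <= alpha i.
    have Pj : (0 < #|[set exists_i0]| <= q)%N by rewrite cards1; case/andP: hq.
    apply: le_trans (delta_le_alpha i [set exists_i0]).
    exact: (bigmin_le_cond 1 (P := fun A : {set 'I_n} => (0 < #|A| <= q)%N)
              (fun A => delta_iA x alpha i A) Pj).
  lra.
have PA : (0 < #|A| <= q)%N by rewrite card_gt0 An0.
have : delta_i x alpha q i <= delta_iA x alpha i A.
  exact: (bigmin_le_cond 1 (P := fun A : {set 'I_n} => (0 < #|A| <= q)%N)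
              (fun A => delta_iA x alpha i A) PA).
move=> hle; have {Hlt hle} Hlt := lt_le_trans Hlt hle.
move: Hlo; rewrite le_min => /andP[Hm Hmu].
move: Hlt; rewrite /delta_iA lt_max => /orP[H1|H2].
  move: H1; rewrite /mk.
  by case: (posp_cases (alpha i - Defs.minset (x i) A)) => [->|[-> ?]]; lra.
have [l _ Hl] := @bigmax_gt_ex _ _ _ _ E0 H2.
move: Hl; rewrite /sigmaG lt_min => /andP[Hl1 Hl2].
have Ha : alpha l + E + E < alpha i.
  by move: Hl1; case: (posp_cases (alpha i - alpha l)) => [->|[-> ?]]; lra.
have Hm2 : alpha l + E < mk x l A.
  by move: Hl2; case: (posp_cases (mk x l A - alpha l)) => [->|[-> ?]]; lra.
have Sl := sug_ge mu (x l) A.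
have := hE l; rewrite ler_distl => /andP[_ Hup].
have : alpha l + E < Num.min (Defs.minset (x l) A) (mu A).
  rewrite lt_min; apply/andP; split; first by rewrite /mk in Hm2.
  lra.
lra.
Qed.

Lemma ms_fit : fit_error x alpha ms = D.
Proof.
apply: le_anti; apply/andP; split; last exact: err_ge (ms_cap hq hA) ms_qmax.
apply: bigmax_le; first exact: D_ge0.
by move=> k _; exact: ms_err.
Qed.

Lemma greatest (mu : {set 'I_n} -> R) : is_capacity mu -> q_maxitive q mu ->
  fit_error x alpha mu = D -> forall X, mu X <= ms X.
Proof.
move=> [mu0 mu1 mu01 mumono] qm hf.
have hE : forall k, `|sugeno mu (x k) - alpha k| <= D.
  by move=> k; rewrite -hf; exact: (le_bigmax 0 (fun k => `|sugeno mu (x k) - alpha k|) k).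
have small : forall Y, Y != set0 -> (#|Y| <= q)%N -> mu Y <= eta Y.
  move=> Y Y0 cY; have /andP[_ muY1] := mu01 Y.
  apply: le_bigmin => // k _; rewrite /impG; case: ifP => // hc.
  have hm1 := mk_le1 k Y.
  have hm : alpha k + D < mk x k Y.
    rewrite ltNge; apply/negP => h; move: hc; rewrite le_min h hm1 //.
  rewrite le_min muY1 andbT leNgt; apply/negP => hmu.
  have Sk := sug_ge mu (x k) Y.
  have := hE k; rewrite ler_distl => /andP[_ Hup].
  have : alpha k + D < Num.min (Defs.minset (x k) Y) (mu Y).
    by rewrite lt_min; apply/andP; split; first by rewrite /mk in hm.
  lra.
move=> X; case: (X =P set0) => [->|/eqP X0]; first by rewrite mu0 ms0.
case: (leqP #|X| q) => hX; first by rewrite ms_small //; apply: small.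
rewrite (qm _ hX); apply: bigmax_le; first exact: ms_ge0.
move=> Y /andP[pY cY]; case: (Y =P set0) => [->|/eqP Y0]; first by rewrite mu0 ms_ge0.
rewrite (ms_big hX); apply: (bigmax_sup Y); first by rewrite Y0 pY cY.
exact: small.
Qed.

End Proof.

Theorem corollary2 (R : realType) (n N : nat)
  (x : 'I_N -> 'I_n -> R) (alpha : 'I_N -> R) (q : nat)
  (hx : forall k i, 0 <= x k i <= 1)
  (halpha : forall k, 0 <= alpha k <= 1)
  (hq : (1 <= q <= n)%N)
  (hA : exists A : {set 'I_n}, #|A| = q /\ eta_q x alpha q A = 1) :
  let mus := mu_star x alpha q in
  [/\ is_capacity mus, q_maxitive q mus,
      fit_error x alpha mus = Delta_q x alpha q &
      forall mu : {set 'I_n} -> R,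
        is_capacity mu -> q_maxitive q mu ->
        fit_error x alpha mu = Delta_q x alpha q ->
        forall X : {set 'I_n}, mu X <= mus X].
Proof.
move=> mus; split.
- exact: ms_cap.
- exact: ms_qmax.
- exact: ms_fit.
- exact: greatest.
Qed.
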